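(* Let $V$ be a $(2n+1)$-dimensional complex vector space, $U\subset V$ a hyperplane, $V_\bullet$ a full flag in $V$, and $\omega$ a skew-symmetric bilinear form on $V$ whose restriction to $U$ is nondegenerate. Then there is a basis $\{e_1,\dots,e_{2n+1}\}$ of $V$ such that $e_1,\dots,e_{2n}\in U$, $e_{2n+1}$ spans $\ker(\omega)=\{v:\omega(v,\cdot)\equiv0\}$, the basis $\{e_1,\dots,e_{2n+1}\}$ is hyperbolic with respect to $\omega$, and each subspace $V_i$ of the flag is spanned by some vectors chosen among $e_1,\dots,e_{2n+1}$ and $e_1+e_{2n+1},\dots,e_{2n}+e_{2n+1}$ (i.e. there are vectors $v_1,\dots,v_{2n+1}$, each of the form $e_k$ or $e_k+e_{2n+1}$ with $k\le 2n$, or $e_{2n+1}$, with $V_i=\langle v_1,\dots,v_i\rangle$ for all $i$).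
   Context: A full flag $V_\bullet$ in $V$ is a chain of subspaces $0\subset V_1\subset\dots\subset V_{2n+1}=V$ with $\dim V_i=i$. A basis $\{e_1,\dots,e_N\}$ is hyperbolic with respect to a skew-symmetric form $\omega$ if for every $i$ either $\omega(e_i,\cdot)\equiv 0$, or there is exactly one index $j$ with $\omega(e_i,e_j)\neq 0$, and for that $j$ one has $\omega(e_i,e_j)=\pm1$. *)

(* Defs.v *)
(* Vectors of V = F^N are row vectors 'rV[F]_N; subspaces are
   represented by row spaces of matrices (mxalgebra, scope %MS). *)
From HB Require Import structures.
From mathcomp Require Import all_boot all_order all_algebra.
Set Implicit Arguments. Unset Strict Implicit. Unset Printing Implicit Defensive.
Import Order.TTheory GRing.Theory Num.Theory.
Local Open Scope ring_scope.

Section Defs.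
Variables (F : fieldType) (N : nat).

Definition bform (M : 'M[F]_N) (u v : 'rV[F]_N) : F := (u *m M *m v^T) 0 0.

Definition skew_form (M : 'M[F]_N) : Prop :=
  forall u v : 'rV[F]_N, bform M u v = - bform M v u.

Definition form_ker (M : 'M[F]_N) (v : 'rV[F]_N) : Prop :=
  forall w : 'rV[F]_N, bform M v w = 0.

Definition nondeg_on (M : 'M[F]_N) (m : nat) (U : 'M[F]_(m, N)) : Prop :=
  forall u : 'rV[F]_N, (u <= U)%MS ->
    (forall w : 'rV[F]_N, (w <= U)%MS -> bform M u w = 0) -> u = 0.

Definition hyperplane (m : nat) (U : 'M[F]_(m, N)) : Prop :=
  \rank U = N.-1.

(* full flag: V_1 ⊂ ... ⊂ V_N, V_(i+1) is given by Vf i, of dimension i+1 *)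
Definition full_flag (Vf : 'I_N -> 'M[F]_N) : Prop :=
  (forall i : 'I_N, \rank (Vf i) = i.+1) /\
  (forall i j : 'I_N, (i <= j)%N -> (Vf i <= Vf j)%MS).

Definition is_basis (e : 'I_N -> 'rV[F]_N) : Prop :=
  row_free (\matrix_(i < N) e i).

Definition hyperbolic (M : 'M[F]_N) (e : 'I_N -> 'rV[F]_N) : Prop :=
  forall i : 'I_N,
    (forall w : 'rV[F]_N, bform M (e i) w = 0) \/
    (exists j : 'I_N,
        (forall k : 'I_N, bform M (e i) (e k) != 0 <-> k = j) /\
        (bform M (e i) (e j) = 1 \/ bform M (e i) (e j) = -1)).

Definition span_upto (v : 'I_N -> 'rV[F]_N) (i : 'I_N) : 'M[F]_N :=
  (\sum_(j < N | (j <= i)%N) <<v j>>)%MS.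

End Defs.

(* Main.v *)
Require Import Defs.
From HB Require Import structures.
From mathcomp Require Import all_boot all_order all_algebra.
Import Order.TTheory GRing.Theory Num.Theory.
Set Implicit Arguments. Unset Strict Implicit. Unset Printing Implicit Defensive.
Local Open Scope ring_scope.

Section Basics.
Variables (F : numFieldType) (N : nat) (M : 'M[F]_N).
Hypothesis skew : skew_form M.
Local Notation b := (bform M).

Lemma bformE u v : b u v = (u *m (M *m v^T)) 0 0.
Proof. by rewrite /bform mulmxA. Qed.

Lemma bformDl u v w : b (u + v) w = b u w + b v w.
Proof. by rewrite !bformE mulmxDl mxE. Qed.
Lemma bformZl a u w : b (a *: u) w = a * b u w.
Proof. by rewrite !bformE -scalemxAl mxE. Qed.
Lemma bformNl u w : b (- u) w = - b u w.
Proof. by rewrite -scaleN1r bformZl mulN1r. Qed.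
Lemma bformBl u v w : b (u - v) w = b u w - b v w.
Proof. by rewrite bformDl bformNl. Qed.
Lemma bform0l w : b 0 w = 0.
Proof. by rewrite -(scale0r 0) bformZl mul0r. Qed.
Lemma bformDr u v w : b w (u + v) = b w u + b w v.
Proof. by rewrite (skew w) bformDl opprD -!skew. Qed.
Lemma bformZr a u w : b w (a *: u) = a * b w u.
Proof. by rewrite (skew w) bformZl -mulrN -skew. Qed.
Lemma bformBr u v w : b w (u - v) = b w u - b w v.
Proof. by rewrite bformDr (skew w (- v)) bformNl -skew. Qed.
Lemma bformNr u w : b w (- u) = - b w u.
Proof. by rewrite (skew w) bformNl -skew. Qed.
Lemma bform0r w : b w 0 = 0.
Proof. by rewrite skew bform0l oppr0. Qed.
Lemma bformxx u : b u u = 0.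
Proof.
have h := skew u u; have : b u u + b u u = 0 by rewrite {1}h addNr.
rewrite -mulr2n -mulr_natr => /eqP; rewrite mulf_eq0 pnatr_eq0 orbF => /eqP //.
Qed.

Definition perp1 (e : 'rV[F]_N) : 'M[F]_N := kermx (M *m e^T).

Lemma perp1P w e : (w <= perp1 e)%MS = (b w e == 0).
Proof.
rewrite sub_kermx bformE; apply/eqP/eqP => [-> | h]; first by rewrite mxE.
by apply/matrixP => i j; rewrite !ord1 h mxE.
Qed.

Definition perp e f := (perp1 e :&: perp1 f)%MS.

Lemma perpP w e f : (w <= perp e f)%MS = (b w e == 0) && (b w f == 0).
Proof. by rewrite sub_capmx !perp1P. Qed.

End Basics.

Section Seq.
Variables (F : fieldType) (N : nat).
Definition ssum (L : seq 'rV[F]_N) (A : 'M[F]_N) : 'M[F]_N :=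
  (\sum_(x <- L | (x <= A)%MS) <<x>>)%MS.

Lemma ssum_sub L A (X : 'M[F]_N) :
  (forall x, x \in L -> (x <= A)%MS -> (x <= X)%MS) -> (ssum L A <= X)%MS.
Proof.
elim: L => [|y L IH] H; rewrite /ssum ?big_nil ?sub0mx // big_cons.
have H' : (ssum L A <= X)%MS by apply: IH => x hx; apply: H; rewrite inE hx orbT.
case: ifP => hy //; by rewrite addsmx_sub genmxE H ?mem_head.
Qed.

Lemma ssum_sup L A x : x \in L -> (x <= A)%MS -> (x <= ssum L A)%MS.
Proof.
elim: L => // y L IH; rewrite inE => /orP [/eqP -> | hx] hA; rewrite /ssum big_cons.
  by rewrite hA; apply: submx_trans (addsmxSl _ _); rewrite genmxE.
case: ifP => _; last exact: IH.
by apply: submx_trans (addsmxSr _ _); apply: IH.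
Qed.

Lemma ssum_le L A : (ssum L A <= A)%MS.
Proof. by apply: ssum_sub. Qed.

Lemma ssum_mono L1 L2 A1 A2 : {subset L1 <= L2} -> (A1 <= A2)%MS ->
  (ssum L1 A1 <= ssum L2 A2)%MS.
Proof.
move=> sL sA; apply: ssum_sub => x hx hA; apply: ssum_sup; first exact: sL.
exact: submx_trans sA.
Qed.

Definition spanned L A := (A <= ssum L A)%MS.

Lemma rank_add_notin m (A : 'M[F]_(m, N)) (v : 'rV[F]_N) :
  ~~ (v <= A)%MS -> (\rank A < \rank (A + v)%MS)%N.
Proof.
move=> hv; apply: rank_ltmx; rewrite ltmxE addsmxSl /=.
by apply: contra hv; apply: submx_trans; apply: addsmxSr.
Qed.

End Seq.

Section Peel.
Variables (F : numFieldType) (N : nat) (M : 'M[F]_N).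
Hypothesis skew : skew_form M.
Local Notation b := (bform M).
Variable k0 : 'rV[F]_N.
Hypothesis hk0 : forall w, b k0 w = 0.

Lemma bk0r w : b w k0 = 0.
Proof. by rewrite skew hk0 oppr0. Qed.

Definition ev (E : seq ('rV[F]_N * 'rV[F]_N)) (i : nat) : 'rV[F]_N :=
  if (i < (size E).*2)%N then
    (if odd i then (nth (0,0) E i./2).2 else (nth (0,0) E i./2).1) else k0.

Definition Bset E := [seq ev E i | i <- iota 0 (size E).*2.+1] ++
                     [seq ev E i + k0 | i <- iota 0 (size E).*2].

Lemma ev_cons p E i : ev (p :: E) i.+2 = ev E i.
Proof. by rewrite /ev /= ?doubleS !ltnS negbK. Qed.

Lemma ev0 p E : ev (p :: E) 0 = p.1.
Proof. by rewrite /ev /= ?doubleS. Qed.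
Lemma ev1 p E : ev (p :: E) 1 = p.2.
Proof. by rewrite /ev /= ?doubleS. Qed.

Lemma ev_big E i : ((size E).*2 <= i)%N -> ev E i = k0.
Proof. by rewrite /ev leqNgt => /negbTE ->. Qed.

Lemma Bset_cons p E : {subset Bset E <= Bset (p :: E)}.
Proof.
move=> x; rewrite !mem_cat => /orP [] /mapP [i hi ->]; apply/orP; [left|right];
  apply/mapP; exists i.+2; rewrite ?ev_cons // mem_iota /= ?doubleS;
  by move: hi; rewrite mem_iota /= !add0n.
Qed.

Lemma Bset_head p E : [/\ p.1 \in Bset (p :: E), p.2 \in Bset (p :: E),
  p.1 + k0 \in Bset (p :: E) & p.2 + k0 \in Bset (p :: E)].
Proof.
rewrite !mem_cat; split; apply/orP; [left|left|right|right]; apply/mapP;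
  [exists 0%N | exists 1%N | exists 0%N | exists 1%N];
  rewrite ?ev0 ?ev1 // mem_iota /= ?doubleS //.
Qed.

Lemma k0_Bset E : k0 \in Bset E.
Proof.
rewrite mem_cat; apply/orP; left; apply/mapP; exists (size E).*2.
  by rewrite mem_iota /= add0n.
by rewrite ev_big.
Qed.

Fixpoint hypE (E : seq ('rV[F]_N * 'rV[F]_N)) : Prop :=
  if E is p :: E' then
    [/\ b p.1 p.2 = 1, forall i, b p.1 (ev E' i) = 0 /\ b p.2 (ev E' i) = 0
      & hypE E']
  else True.

Lemma decomp (S : 'M[F]_N) w : (w <= S + k0)%MS ->
  exists s t, (s <= S)%MS /\ w = s + t *: k0.
Proof.
case/sub_addsmxP => [[u1 u2]] /= ->; exists (u1 *m S), (u2 0 0); split.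
  exact: submxMl.
by rewrite {1}(mx11_scalar u2) mul_scalar_mx.
Qed.

End Peel.

From mathcomp Require Import ring zify.

Section Norm.
Variables (F : numFieldType) (N : nat) (M : 'M[F]_N).
Hypothesis skew : skew_form M.
Local Notation b := (bform M).
Variable k0 : 'rV[F]_N.
Hypothesis hk0 : forall w, b k0 w = 0.

Lemma normalize (S : 'M[F]_N) e0 f0 t s :
  (e0 <= S)%MS -> (f0 <= S)%MS -> b e0 f0 != 0 ->
  exists e f x' y', [/\ (e <= S)%MS /\ (f <= S)%MS, b e f = 1,
     (exists g, x' = g *: (e0 + t *: k0)),
     (exists g1 g2, y' = g1 *: (e0 + t *: k0) + g2 *: (f0 + s *: k0)) &
     (x' = e \/ x' = e + k0) /\ (y' = f \/ y' = f + k0)].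
Proof.
move=> he0 hf0 hw; set w0 := b e0 f0 in hw.
have bee : b e0 e0 = 0 by apply: (bformxx skew).
have [t0|tn0] := eqVneq t 0.
  have [s0|sn0] := eqVneq s 0.
    exists (w0^-1 *: e0), f0, (w0^-1 *: (e0 + t *: k0)), (f0 + s *: k0); split; [split|..|split].
    - exact: scalemx_sub.
    - done.
    - by rewrite bformZl mulVf.
    - by exists w0^-1.
    - by exists 0, 1; rewrite scale0r scale1r add0r.
    - by left; rewrite t0 scale0r addr0.
    - by left; rewrite s0 scale0r addr0.
  exists ((s / w0) *: e0), (s^-1 *: f0), ((s / w0) *: (e0 + t *: k0)),
    (s^-1 *: (f0 + s *: k0)); split; [split|..|split].
  - exact: scalemx_sub.
  - exact: scalemx_sub.
  - rewrite bformZl (bformZr skew) -/w0; field; by apply/andP.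
  - by exists (s / w0).
  - by exists 0, s^-1; rewrite scale0r add0r.
  - by left; rewrite t0 scale0r addr0.
  - right; apply/rowP => j; rewrite !mxE; field; done.
set e := t^-1 *: e0.
set y1 := f0 - s *: e.
have om : b e y1 = t^-1 * w0.
  rewrite /y1 (bformBr skew) // !(bformZr skew) // !bformZl bee /w0; ring.
have omn : b e y1 != 0 by rewrite om mulf_neq0 // invr_eq0.
exists e, ((b e y1)^-1 *: y1), (t^-1 *: (e0 + t *: k0)), ((b e y1)^-1 *: y1); split; [split|..|split].
- exact: scalemx_sub.
- apply: scalemx_sub; rewrite /y1; apply: addmx_sub => //.
  by rewrite -scaleNr /e; do 2 apply: scalemx_sub.
- by rewrite (bformZr skew) // mulVf.
- by exists t^-1.
- exists (- (b e y1)^-1 * s * t^-1), (b e y1)^-1.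
  rewrite om /y1 /e; apply/rowP => j; rewrite !mxE; field; by rewrite tn0 hw.
- by right; rewrite /e; apply/rowP => j; rewrite !mxE; field.
- by left.
Qed.

End Norm.

Section Peel2.
Variables (F : numFieldType) (N : nat) (M : 'M[F]_N).
Hypothesis skew : skew_form M.
Local Notation b := (bform M).
Variable k0 : 'rV[F]_N.
Hypothesis hk0 : forall w, b k0 w = 0.

Lemma k0_perp1 x : (k0 <= perp1 M x)%MS.
Proof. by rewrite perp1P hk0. Qed.

Lemma vec_k0 w : (w <= k0)%MS -> forall z, b w z = 0.
Proof. by case/sub_rVP => a -> z; rewrite bformZl hk0 mulr0. Qed.

Lemma bfe e f : b e f = 1 -> b f e = -1.
Proof. by move=> h; rewrite skew h. Qed.

Lemma proj_perp e f (x' y' : 'rV[F]_N) : b e f = 1 ->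
  (forall z, b x' z = b e z) -> (forall z, b y' z = b f z) ->
  forall w, ((w - b w f *: x' + b w e *: y')%R <= perp M e f)%MS.
Proof.
move=> hef hx hy w; rewrite perpP !bformDl !bformNl !bformZl !hx !hy.
by rewrite (bformxx skew) (bformxx skew) hef (bfe hef); apply/andP; split; apply/eqP; ring.
Qed.

Lemma inSk (S : 'M[F]_N) e f (w : 'rV[F]_N) : (w <= S + k0)%MS -> (w <= perp M e f)%MS ->
  (w <= (S :&: perp M e f) + k0)%MS.
Proof.
case/decomp => s [t [hs ->]]; rewrite !perpP !bformDl !bformZl !hk0 !mulr0 !addr0 => hp.
apply: addmx_sub_adds; last by apply: scalemx_sub.
by rewrite sub_capmx hs perpP.
Qed.

Lemma rank_peel (S : 'M[F]_N) e f : (e <= S)%MS -> (f <= S)%MS -> b e f = 1 ->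
  \rank S = (\rank (S :&: perp M e f)%MS).+2.
Proof.
move=> he hf hef; set S' := (S :&: perp M e f)%MS.
have hS' : (S' <= perp1 M e)%MS by rewrite /S' /perp; apply: submx_trans (capmxSr _ _) (capmxSl _ _).
apply/eqP; rewrite eqn_leq; apply/andP; split.
  have sub : (S <= (S' + e) + f)%MS.
    apply/row_subP => r; set w := row r S.
    have hw : (w <= S)%MS by apply: row_sub.
    have -> : w = (w - b w f *: e + b w e *: f) + b w f *: e - b w e *: f.
      by apply/rowP => j; rewrite !mxE; ring.
    apply: addmx_sub; last by rewrite -scaleNr; apply: scalemx_sub; apply: addsmxSr.
    apply: addmx_sub; last by apply: submx_trans (addsmxSl _ _);
      apply: scalemx_sub; apply: addsmxSr.
    apply: submx_trans (addsmxSl _ _); apply: submx_trans (addsmxSl _ _).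
    rewrite sub_capmx proj_perp // andbT.
    apply: addmx_sub; last exact: scalemx_sub.
    by apply: addmx_sub => //; rewrite -scaleNr; apply: scalemx_sub.
  apply: leq_trans (mxrankS sub) _.
  have h1 := rank_leq_row e; have h2 := rank_leq_row f.
  have h3 := (mxrank_adds_leqif S' e).1; have h4 := (mxrank_adds_leqif (S' + e)%MS f).1.
  lia.
have ne : ~~ (e <= S')%MS.
  apply/negP => /(submx_trans)/(_ (capmxSr _ _)); rewrite perpP hef.
  by rewrite oner_eq0 andbF.
have nf : ~~ (f <= S' + e)%MS.
  apply/negP => h.
  have : (f <= perp1 M e)%MS.
    by apply: (submx_trans h); rewrite addsmx_sub hS' /= perp1P (bformxx skew).
  by rewrite perp1P (bfe hef) oppr_eq0 oner_eq0.
have h1 := rank_add_notin ne; have h2 := rank_add_notin nf.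
have h3 : (\rank ((S' + e) + f)%MS <= \rank S)%N.
  by apply: mxrankS; rewrite !addsmx_sub he hf !andbT /S' capmxSl.
lia.
Qed.

Lemma nondeg_peel (S : 'M[F]_N) e f : nondeg_on M S -> (e <= S)%MS -> (f <= S)%MS ->
  b e f = 1 -> nondeg_on M (S :&: perp M e f)%MS.
Proof.
move=> nd he hf hef u; rewrite sub_capmx => /andP [huS hup] hu.
apply: nd => // w hw.
move: hup; rewrite perpP => /andP [/eqP hue /eqP huf].
have -> : w = (w - b w f *: e + b w e *: f) + (b w f *: e - b w e *: f).
  by apply/rowP => j; rewrite !mxE; ring.
rewrite (bformDr skew) hu; last first.
  rewrite sub_capmx proj_perp // andbT.
  apply: addmx_sub; last exact: scalemx_sub.
  by apply: addmx_sub => //; rewrite -scaleNr; apply: scalemx_sub.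
rewrite (bformBr skew) !(bformZr skew) hue huf.
by rewrite !mulr0 subr0 add0r.
Qed.

End Peel2.

Lemma sub_rank_eq (F : fieldType) m1 m2 n (A : 'M[F]_(m1, n)) (B : 'M[F]_(m2, n)) :
  (A <= B)%MS -> (\rank B <= \rank A)%N -> (B <= A)%MS.
Proof. by move=> sAB h; rewrite -(mxrank_leqif_sup sAB).2 eqn_leq mxrankS. Qed.

Lemma coef_sub (F : fieldType) n m (c : F) (v : 'rV[F]_n) (A : 'M[F]_(m, n)) :
  (c = 0 \/ (v <= A)%MS) -> (c *: v <= A)%MS.
Proof. by case=> [->|h]; [rewrite scale0r sub0mx | exact: scalemx_sub]. Qed.

Section Peel3.
Variables (F : numFieldType) (N : nat) (M : 'M[F]_N).
Hypothesis skew : skew_form M.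
Local Notation b := (bform M).
Variable k0 : 'rV[F]_N.
Hypothesis hk0 : forall w, b k0 w = 0.
Hypothesis hk0n : k0 != 0.

Lemma peel0 (S : 'M[F]_N) (C : nat -> 'M[F]_N) :
  \rank S = 0%N -> (forall i, (C i <= S + k0)%MS) -> forall i, spanned (Bset k0 [::]) (C i).
Proof.
move=> /eqP; rewrite mxrank_eq0 => /eqP -> hC i; rewrite /spanned.
have hCi : (C i <= k0)%MS by move: (hC i); rewrite adds0mx.
have [C0|Cn0] := eqVneq (C i) 0; first by rewrite C0 sub0mx.
have k0C : (k0 <= C i)%MS.
  by apply: sub_rank_eq hCi _; rewrite rank_rV hk0n lt0n mxrank_eq0.
by apply: submx_trans hCi _; apply: ssum_sup (k0_Bset k0 _) k0C.
Qed.

Lemma peel d : forall (S : 'M[F]_N) (C : nat -> 'M[F]_N),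
  (\rank S <= d)%N -> nondeg_on M S ->
  (forall i, (C i <= S + k0)%MS) -> (forall i j, (i <= j)%N -> (C i <= C j)%MS) ->
  (exists i0, (S <= C i0)%MS) ->
  exists E, [/\ forall i, (i < (size E).*2)%N -> (ev k0 E i <= S)%MS, hypE M k0 E,
      \rank S = (size E).*2 & forall i, spanned (Bset k0 E) (C i)].
Proof.
elim: d => [|d IH] S C hrk nd hC hmono hex.
  have r0 : \rank S = 0%N by apply/eqP; rewrite -leqn0.
  by exists [::]; split; [by []|by []|by rewrite r0|exact: peel0 r0 hC].
have [r0|rpos] := eqVneq (\rank S) 0%N.
  by exists [::]; split; [by []|by []|by rewrite r0|exact: peel0 r0 hC].
have Sk : ~~ (S <= k0)%MS.
  apply/negP => hSk; move/eqP: hk0n; apply; apply: nd => //.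
  apply: sub_rank_eq hSk _; rewrite rank_rV hk0n lt0n; exact: rpos.
have [i0 hi0] := hex.
have exa : exists a, ~~ (C a <= k0)%MS.
  by exists i0; apply: contra Sk => h; exact: submx_trans hi0 h.
case: (ex_minnP exa) => a Pa amin.
case/row_subPn: (Pa) => r hr; set x := row r (C a) in hr.
have hxC : (x <= C a)%MS by apply: row_sub.
have [e0 [t [he0 hx]]] := decomp (submx_trans hxC (hC a)).
have e0n : e0 != 0.
  apply: contra hr => /eqP e00; rewrite hx e00 add0r; apply: scalemx_sub.
  exact: submx_refl.
have bx : forall z, b z x = b z e0.
  by move=> z; rewrite hx (bformDr skew) (bformZr skew) (bk0r skew hk0) mulr0 addr0.
have Sx : ~~ (S <= perp1 M x)%MS.
  apply/negP => hS; move/eqP: e0n; apply; apply: nd => // w hw.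
  rewrite skew; move: (submx_trans hw hS); rewrite perp1P bx => /eqP ->.
  by rewrite oppr0.
have exb : exists j, ~~ (C j <= perp1 M x)%MS.
  by exists i0; apply: contra Sx => h; exact: submx_trans hi0 h.
case: (ex_minnP exb) => bb Pb bmin.
case/row_subPn: (Pb) => r' hr'; set y := row r' (C bb) in hr'.
have hyC : (y <= C bb)%MS by apply: row_sub.
have [f0 [s [hf0 hy]]] := decomp (submx_trans hyC (hC bb)).
have bxy : b e0 f0 != 0.
  move: hr'; rewrite perp1P bx hy skew (bformDr skew) (bformZr skew) (bk0r skew hk0) mulr0 addr0.
  by rewrite oppr_eq0.
have ab : (a <= bb)%N.
  apply: amin; apply/negP => h; move: hr'; rewrite perp1P.
  by rewrite (vec_k0 hk0 (submx_trans hyC h)) eqxx.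
have [e [f [x' [y' [[heS hfS] hef [g hg] [g1 [g2 hg12]] [hx' hy']]]]]] :=
  normalize skew k0 t s he0 hf0 bxy.
rewrite -hx in hg; rewrite -hx -hy in hg12.
have hx'b : forall z, b x' z = b e z.
  by move=> z; case: hx' => ->; rewrite ?bformDl ?hk0 ?addr0.
have hy'b : forall z, b y' z = b f z.
  by move=> z; case: hy' => ->; rewrite ?bformDl ?hk0 ?addr0.
set S' := (S :&: perp M e f)%MS.
set C' := fun i => (C i :&: (S' + k0))%MS.
have rS := rank_peel skew heS hfS hef.
have [E' [hE'S hE'hyp hE'r hE'sp]] : exists E', [/\ forall i, (i < (size E').*2)%N ->
     (ev k0 E' i <= S')%MS, hypE M k0 E', \rank S' = (size E').*2 &
     forall i, spanned (Bset k0 E') (C' i)].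
  have hS'r : (\rank S' <= d)%N by move: hrk; rewrite rS -/S' ltnS => /ltnW.
  apply: (IH S' C' hS'r).
  - exact: (nondeg_peel skew nd heS hfS hef).
  - by move=> i; apply: capmxSr.
  - by move=> i j hij; apply: capmxS => //; apply: hmono.
  - exists i0; rewrite sub_capmx addsmxSl andbT.
    by apply: submx_trans hi0; apply: capmxSl.
exists ((e, f) :: E'); split.
- case=> [|[|i]] hi; rewrite ?ev0 ?ev1 ?ev_cons //.
  apply: submx_trans (capmxSl _ _); apply: hE'S.
  by move: hi; rewrite /= doubleS !ltnS.
- split => // i.
  have [hi|hi] := ltnP i (size E').*2.
    move: (submx_trans (hE'S i hi) (capmxSr _ _)); rewrite perpP.
    by case/andP => /eqP h1 /eqP h2; rewrite /= skew h1 skew h2 oppr0.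
  by rewrite ev_big // /= !(bk0r skew hk0).
- by rewrite rS hE'r /= doubleS.
move=> i; rewrite /spanned; apply/row_subP => r0; set w := row r0 (C i).
have hwC : (w <= C i)%MS by apply: row_sub.
have hxw : b w f = 0 \/ (x' <= C i)%MS.
  have [ai|ia] := leqP a i.
    right; rewrite hg; apply: scalemx_sub.
    exact: submx_trans hxC (hmono _ _ ai).
  left; apply: (vec_k0 hk0); apply: submx_trans hwC _.
  by apply/negP => /negP h; move: (amin _ h); rewrite leqNgt ia.
have hyw : b w e = 0 \/ (y' <= C i)%MS.
  have [bi|ib] := leqP bb i.
    right; rewrite hg12; apply: addmx_sub; apply: scalemx_sub.
      exact: submx_trans hxC (hmono _ _ (leq_trans ab bi)).
    exact: submx_trans hyC (hmono _ _ bi).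
  left; have hCi : (C i <= perp1 M x)%MS.
    by apply/negP => /negP h; move: (bmin _ h); rewrite leqNgt ib.
  move: (submx_trans hwC hCi); rewrite perp1P => /eqP hwx.
  by rewrite skew -hx'b hg bformZl (skew x w) hwx oppr0 mulr0 oppr0.
set p := (w - b w f *: x' + b w e *: y').
have -> : w = p + (b w f *: x' - b w e *: y') by rewrite /p; apply/rowP => j; rewrite !mxE; ring.
have hSk : forall z : 'rV[F]_N, (z <= C i)%MS -> (z <= S + k0)%MS.
  by move=> z hz; apply: submx_trans hz (hC i).
have hx'Sk : (x' <= S + k0)%MS.
  by rewrite hg; apply: scalemx_sub; exact: submx_trans hxC (hC a).
have hy'Sk : (y' <= S + k0)%MS.
  by rewrite hg12; apply: addmx_sub; apply: scalemx_sub;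
    [exact: submx_trans hxC (hC a) | exact: submx_trans hyC (hC bb)].
have hpC : (p <= C i)%MS.
  rewrite /p; apply: addmx_sub; last by apply: coef_sub.
  apply: addmx_sub => //; rewrite -scaleNr; apply: coef_sub.
  by case: hxw => [->|h]; [left; exact: oppr0 | right].
have hpS : (p <= S + k0)%MS.
  rewrite /p; apply: addmx_sub; last exact: scalemx_sub.
  apply: addmx_sub; first exact: hSk.
  by rewrite -scaleNr; apply: scalemx_sub.
have hpP : (p <= perp M e f)%MS := proj_perp skew hef hx'b hy'b w.
have hpC' : (p <= C' i)%MS by rewrite sub_capmx hpC (inSk hk0 hpS hpP).
have [hB1 hB2 hB3 hB4] := Bset_head k0 (e, f) E'.
apply: addmx_sub.
  apply: submx_trans hpC' _; apply: submx_trans (hE'sp i) _.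
  by apply: ssum_mono; [apply: Bset_cons | apply: capmxSl].
apply: addmx_sub.
  apply: coef_sub; case: hxw => [h|h]; [by left | right].
  by apply: ssum_sup h; case: hx' => ->.
rewrite -scaleNr; apply: coef_sub; case: hyw => [->|h]; [left; exact: oppr0 | right].
by apply: ssum_sup h; case: hy' => ->.
Qed.

End Peel3.

Definition G (F : numFieldType) (i k : nat) : F :=
  if i./2 == k./2 then (if i == k then 0 else if odd i then -1 else 1) else 0.

Lemma G_SS (F : numFieldType) i k : G F i.+2 k.+2 = G F i k.
Proof. by rewrite /G /= !eqSS negbK. Qed.

Definition pj (i : nat) := if odd i then i.-1 else i.+1.

Lemma G_pj (F : numFieldType) i : G F i (pj i) = if odd i then -1 else 1.
Proof.
rewrite /G /pj; case ho: (odd i).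
  have -> : i.-1./2 = i./2 by rewrite -(odd_halfK ho) half_double.
  have ip : (0 < i)%N by case: i ho.
  by rewrite eqxx ifF //; apply/eqP; lia.
have -> : i.+1./2 = i./2.
  by rewrite -[in LHS](even_halfK (negbT ho)) /= uphalf_double.
by rewrite eqxx ifF //; apply/eqP; lia.
Qed.

Lemma G_other (F : numFieldType) i k : k != pj i -> G F i k = 0.
Proof.
rewrite /G => hk; case: eqP => // hh; case: eqP => // hik.
exfalso; move/eqP: hk; apply; rewrite /pj.
have hi := odd_double_half i; have hk := odd_double_half k; rewrite hh in hi.
by case: (odd i) hi => hi; case: (odd k) hk => hk /=; lia.
Qed.

Section Gram.
Variables (F : numFieldType) (N : nat) (M : 'M[F]_N).
Hypothesis skew : skew_form M.
Local Notation b := (bform M).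
Variable k0 : 'rV[F]_N.
Hypothesis hk0 : forall w, b k0 w = 0.

Lemma gram E : hypE M k0 E -> forall i k, (i < (size E).*2)%N -> (k < (size E).*2)%N ->
  b (ev k0 E i) (ev k0 E k) = G F i k.
Proof.
elim: E => [|p E IH] //= [h1 h2 h3] i k.
case: i => [|[|i]]; case: k => [|[|k]];
  rewrite ?ev0 ?ev1 ?ev_cons ?(bformxx skew) ?h1 //= ?doubleS ?ltnS => hi hk.
all: try by rewrite /G.
- by case: (h2 k) => -> _; rewrite /G.
- by rewrite skew h1 /G.
- by case: (h2 k) => _ ->; rewrite /G.
- by rewrite skew; case: (h2 i) => -> _; rewrite oppr0 /G.
- by rewrite skew; case: (h2 i) => _ ->; rewrite oppr0 /G.
- by rewrite G_SS IH.
Qed.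

End Gram.

Lemma bform_delta (F : numFieldType) n (M : 'M[F]_n) i j :
  bform M (delta_mx 0 i) (delta_mx 0 j) = M i j.
Proof. by rewrite /bform -rowE trmx_delta -colE !mxE. Qed.

Lemma skew_ker (F : numFieldType) n (M : 'M[F]_n.*2.+1) : skew_form M ->
  exists2 k0 : 'rV_(n.*2.+1), k0 != 0 & k0 *m M = 0.
Proof.
move=> sk; apply/det0P.
have hT : M^T = - M by apply/matrixP => i j; rewrite !mxE -!bform_delta sk.
have h : \det M = - \det M.
  rewrite -{1}det_tr hT -scaleN1r detZ -signr_odd /= odd_double /= expr1.
  by rewrite mulN1r.
have : \det M + \det M = 0 by rewrite {1}h addNr.
rewrite -mulr2n -mulr_natr => /eqP; rewrite mulf_eq0 pnatr_eq0 orbF //.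
Qed.

Theorem lemma3 (F : numClosedFieldType) (n : nat)
    (U : 'M[F]_(n.*2.+1)) (Vf : 'I_(n.*2.+1) -> 'M[F]_(n.*2.+1))
    (M : 'M[F]_(n.*2.+1)) :
  hyperplane U -> full_flag Vf -> skew_form M -> nondeg_on M U ->
  exists e : 'I_(n.*2.+1) -> 'rV[F]_(n.*2.+1),
    [/\ is_basis e,
        (forall k : 'I_(n.*2.+1), k != ord_max -> (e k <= U)%MS),
        (forall v : 'rV[F]_(n.*2.+1), form_ker M v <-> (v <= e ord_max)%MS),
        hyperbolic M e &
        exists v : 'I_(n.*2.+1) -> 'rV[F]_(n.*2.+1),
          (forall i : 'I_(n.*2.+1),
             (exists k : 'I_(n.*2.+1), v i = e k) \/
             (exists2 k : 'I_(n.*2.+1), k != ord_max & v i = e k + e ord_max)) /\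
          (forall i : 'I_(n.*2.+1), (Vf i == span_upto v i)%MS)].
Proof.
move=> hU [hrk hmono] sk nd.
have [k0 k0n k0M] := skew_ker sk.
have hk0 : forall w, bform M k0 w = 0 by move=> w; rewrite /bform k0M mul0mx mxE.
have k0U : ~~ (k0 <= U)%MS.
  by apply/negP => h; move/eqP: k0n; apply; apply: nd => // w _; exact: hk0.
have rU : \rank U = n.*2 by rewrite hU.
have full : row_full (U + k0)%MS.
  rewrite /row_full eqn_leq rank_leq_col /=; have := rank_add_notin k0U.
  by rewrite rU.
set C := fun i : nat => Vf (inord (minn i n.*2)).
have CE : forall i : 'I_(n.*2.+1), C i = Vf i.
  move=> i; rewrite /C; congr Vf; apply: val_inj => /=; rewrite inordK.
    by apply/minn_idPl; rewrite -ltnS.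
  by rewrite ltnS geq_minr.
have hC : forall i, (C i <= U + k0)%MS by move=> i; exact: submx_full.
have hmono' : forall i j, (i <= j)%N -> (C i <= C j)%MS.
  move=> i j hij; apply: hmono; rewrite !inordK ?ltnS ?geq_minr //; lia.
have hex : exists i0, (U <= C i0)%MS.
  by exists n.*2; apply: submx_full; rewrite /C minnn /row_full hrk inordK.
have [E [hES hEhyp hEr hEsp]] := peel sk hk0 k0n (leqnn _) nd hC hmono' hex.
have sE : size E = n by apply: double_inj; rewrite -hEr rU.
set e := fun i : 'I_(n.*2.+1) => ev k0 E i.
have eM : e ord_max = k0 by rewrite /e ev_big // sE.
have BA : forall x, x \in Bset k0 E -> (x <= \matrix_i e i)%MS.
  move=> x; rewrite mem_cat => /orP [] /mapP [m]; rewrite mem_iota add0n sE =>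
    /andP [_ hm] ->.
    by apply: (eq_row_sub (Ordinal hm)); rewrite rowK.
  have hmN : (m < n.*2.+1)%N by lia.
  apply: addmx_sub; first by apply: (eq_row_sub (Ordinal hmN)); rewrite rowK.
  by apply: (eq_row_sub ord_max); rewrite rowK eM.
exists e; split.
- rewrite /is_basis /row_free eqn_leq rank_leq_row /=.
  have h2 : (C n.*2 <= \matrix_i e i)%MS.
    exact: submx_trans (hEsp n.*2) (ssum_sub (fun x hx _ => BA x hx)).
  have := mxrankS h2; rewrite /C minnn hrk inordK //.
- move=> k hk; apply: hES; rewrite sE.
  by move: hk; rewrite -val_eqE /= => hk; rewrite ltn_neqAle hk -ltnS ltn_ord.
- move=> v; rewrite eM; split; last exact: (vec_k0 hk0).
  move=> hv; have := submx_full v full; case/decomp => s [t [hs hvst]].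
  have s0 : s = 0.
    apply: nd => // w hw; have := hv w.
    by rewrite hvst bformDl bformZl hk0 mulr0 addr0.
  by rewrite hvst s0 add0r; apply: scalemx_sub; exact: submx_refl.
- move=> i; have [hi|hi] := ltnP i n.*2; last first.
    by left => w; rewrite /e ev_big ?sE //; exact: hk0.
  right.
  have hj' : (pj i < n.*2)%N.
    rewrite /pj; case ho: (odd i) => /=; first lia.
    have : i.+1 != n.*2.
      by apply/eqP => h; move: (congr1 odd h); rewrite /= odd_double ho.
    move=> hne; rewrite ltn_neqAle hne /=; exact: hi.
  have hj : (pj i < n.*2.+1)%N by apply: ltnW.
  have hiE : (i < (size E).*2)%N by rewrite sE.
  have hjE : (pj i < (size E).*2)%N by rewrite sE.
  exists (Ordinal hj); split.
    move=> k; split; last first.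
      move=> ->; rewrite /e /= (gram sk hEhyp hiE hjE) G_pj.
      by case: ifP; rewrite ?oppr_eq0 oner_eq0.
    have [hk|hk] := ltnP k n.*2.
      have hkE : (k < (size E).*2)%N by rewrite sE.
      rewrite /e (gram sk hEhyp hiE hkE).
      case: (eqVneq (val k) (pj i)) => [e1|ne] h; first by apply: val_inj.
      by rewrite G_other ?eqxx in h.
    by rewrite /e (@ev_big _ _ k0 E k) ?sE // (bk0r sk hk0) eqxx.
  rewrite /e /= (gram sk hEhyp hiE hjE) G_pj.
  by case: ifP => _; [right|left].
set prev := fun i : 'I_(n.*2.+1) =>
  if val i is j.+1 then Vf (inord j) else (0 : 'M[F]_(n.*2.+1)).
have rprev : forall i, \rank (prev i) = i.
  move=> [[|j] hj]; rewrite /prev /=; first by rewrite mxrank0.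
  by rewrite hrk inordK // ltnW.
have prevV : forall i, (prev i <= Vf i)%MS.
  move=> [[|j] hj]; rewrite /prev /=; first by rewrite sub0mx.
  by apply: hmono; rewrite inordK /=; lia.
have exv : forall i, exists x, [/\ x \in Bset k0 E, (x <= Vf i)%MS & ~~ (x <= prev i)%MS].
  move=> i; have : has (fun x => (x <= Vf i)%MS && ~~ (x <= prev i)%MS) (Bset k0 E).
    apply/negPn/negP => /hasPn H.
    have h1 : (Vf i <= prev i)%MS.
      have := hEsp i; rewrite /spanned CE => h; apply: submx_trans h _.
      by apply: ssum_sub => x hx hxV; move: (H x hx); rewrite hxV /= negbK.
    by have := mxrankS h1; rewrite hrk rprev ltnn.
  by case/hasP => x hx /andP [h1 h2]; exists x.
have [v hv] := fin_all_exists exv.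
exists v; split.
  move=> i; have [hx _ _] := hv i; move: hx.
  rewrite mem_cat => /orP [] /mapP [m]; rewrite mem_iota add0n sE => /andP [_ hm] ->.
    by left; exists (Ordinal hm).
  have hmN : (m < n.*2.+1)%N by lia.
  right; exists (Ordinal hmN); last by rewrite eM.
  by rewrite -val_eqE /= neq_ltn hm.
have sub1 : forall i j : 'I_(n.*2.+1), (j <= i)%N -> (span_upto v j <= span_upto v i)%MS.
  move=> i j hji; apply/sumsmx_subP => k hk; apply: (sumsmx_sup k) => //.
  exact: leq_trans hk hji.
have vin : forall i, (v i <= span_upto v i)%MS.
  by move=> i; apply: (sumsmx_sup i) => //; rewrite genmxE.
have le1 : forall i, (span_upto v i <= Vf i)%MS.
  move=> i; apply/sumsmx_subP => j hj; rewrite genmxE.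
  by have [_ hvj _] := hv j; exact: submx_trans hvj (hmono _ _ hj).
have le2 : forall m (i : 'I_(n.*2.+1)), val i = m -> (Vf i <= span_upto v i)%MS.
  elim=> [|m IH] i hi; have [_ hvi hvp] := hv i;
  (have hVi : (Vf i <= prev i + v i)%MS by
    apply: sub_rank_eq; [by rewrite addsmx_sub prevV hvi |
      by rewrite hrk; have := rank_add_notin hvp; rewrite rprev]);
  apply: submx_trans hVi _; rewrite addsmx_sub vin andbT.
    by move: hi; rewrite /prev; case: i {hvi hvp} => [[|j] hj] //= _; rewrite sub0mx.
  move: hi; rewrite /prev; case: i {hvi hvp} => [[|j] hj] //= [hjm].
  have hjN : (j < n.*2.+1)%N by apply: ltnW.
  apply: submx_trans (IH (inord j) _) _; first by rewrite -hjm; exact: inordK hjN.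
  by apply: sub1; rewrite /= inordK.
by move=> i; apply/andP; split; [exact: (le2 _ i erefl) | exact: le1].
Qed.
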